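(* For any $d$-dimensional Fano simplex $\Delta$ of Gorenstein index $g$, the number $g^{d-1}\lambda(\Delta^* )$ is an integer.
   Context: A Fano simplex is a full-dimensional simplex in $\mathbb{Q}^d$ with primitive vertices in $\mathbb{Z}^d$ and the origin in its interior. Its dual is $\Delta^*=\{u:\langle u,v\rangle\ge-1\ \forall v\in\Delta\}$. The Gorenstein index of a Fano simplex is the least $g\ge1$ such that $g\Delta^*$ has integral vertices. For an IP simplex (origin in the interior) with vertices $v_0,\dots,v_d$, the weight system is $Q=(q_0,\dots,q_d)$, $q_i=|\det(v_j:j\neq i)|$, and the factor $\lambda$ is the unique positive rational with $Q=\lambda Q'$, $Q'$ positive integers with $\gcd 1$. *)

(* Defs.v *)
From HB Require Import structures.
From mathcomp Require Import all_boot all_order all_algebra.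
Set Implicit Arguments. Unset Strict Implicit. Unset Printing Implicit Defensive.
Import Order.TTheory GRing.Theory Num.Theory.
Local Open Scope ring_scope.

Definition point d := 'rV[rat]_d.

Definition pairing d (u v : point d) : rat := \sum_(j < d) u 0 j * v 0 j.

Definition integral d (x : point d) : Prop := forall j, x 0 j \is a Num.int.

Definition primitive d (x : point d) : Prop :=
  integral x /\
  forall (k : nat) (w : point d), integral w -> x = k%:R *: w -> k = 1%N.

Definition conv_hull d n (v : 'I_n -> point d) : point d -> Prop :=
  fun x => exists a : 'I_n -> rat, (forall i, 0 <= a i) /\ \sum_i a i = 1
           /\ x = \sum_i a i *: v i.

Definition affinely_independent d n (v : 'I_n -> point d) : Prop :=
  forall c : 'I_n -> rat, \sum_i c i = 0 -> \sum_i c i *: v i = 0 ->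
    forall i, c i = 0.

(* A d-dimensional Fano simplex with vertices v_0..v_d: full-dimensional
   (affinely independent vertices), primitive integral vertices, and the
   origin in its interior (i.e. a strictly positive convex combination of the
   vertices, which for a full-dimensional simplex is exactly the interior). *)
Definition Fano_simplex d (v : 'I_d.+1 -> point d) : Prop :=
  affinely_independent v /\ (forall i, primitive (v i)) /\
  exists a : 'I_d.+1 -> rat, (forall i, 0 < a i) /\ \sum_i a i = 1 /\
    \sum_i a i *: v i = 0.

Definition dual d (S : point d -> Prop) : point d -> Prop :=
  fun u => forall x, S x -> -1 <= pairing u x.

Definition dilate d (g : rat) (S : point d -> Prop) : point d -> Prop :=
  fun y => exists x, S x /\ y = g *: x.

Definition is_vertex d (S : point d -> Prop) (u : point d) : Prop :=
  S u /\ forall x y (t : rat), S x -> S y -> 0 < t < 1 ->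
    u = t *: x + (1 - t) *: y -> x = y.

Definition has_integral_vertices d (S : point d -> Prop) : Prop :=
  forall u, is_vertex S u -> integral u.

Definition gorenstein_index d (v : 'I_d.+1 -> point d) (g : nat) : Prop :=
  (0 < g)%N /\ has_integral_vertices (dilate g%:R (dual (conv_hull v))) /\
  forall g' : nat, (0 < g')%N ->
    has_integral_vertices (dilate g'%:R (dual (conv_hull v))) -> (g <= g')%N.

(* weight system Q = (q_0..q_d), q_i = |det(w_j : j <> i)| of an IP simplex
   with vertices w_0..w_d *)
Definition weight d (w : 'I_d.+1 -> point d) (i : 'I_d.+1) : rat :=
  `| \det (\matrix_(k < d, j < d) w (lift i k) 0 j) |.

Definition is_factor n (Q : 'I_n -> rat) (lam : rat) : Prop :=
  0 < lam /\ exists Q' : 'I_n -> nat, (forall i, (0 < Q' i)%N) /\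
    \big[gcdn/0%N]_(i < n) Q' i = 1%N /\ forall i, Q i = lam * (Q' i)%:R.

Definition enumerates_vertices d (S : point d -> Prop) (w : 'I_d.+1 -> point d)
  : Prop := injective w /\ forall u, is_vertex S u <-> exists i, u = w i.

(* Main.v *)
Require Import Defs.
From HB Require Import structures.
From mathcomp Require Import all_boot all_order all_algebra.
From mathcomp Require Import lra zify.
Import Order.TTheory GRing.Theory Num.Theory.
Local Open Scope ring_scope.
Set Implicit Arguments. Unset Strict Implicit.

Lemma det_int n (A : 'M[rat]_n) :
  (forall i j, A i j \is a Num.int) -> \det A \is a Num.int.
Proof.
move=> H; apply: rpred_sum => s _; apply: rpredM.
  by apply: rpredX; apply: rpredN; apply: rpred1.
by apply: rpred_prod => i _; apply: H.
Qed.

Lemma pairing_sumr d n (u : point d) (a : 'I_n -> rat) (x : 'I_n -> point d) :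
  pairing u (\sum_i a i *: x i) = \sum_i a i * pairing u (x i).
Proof.
rewrite /pairing.
under eq_bigr => j _ do rewrite summxE mulr_sumr.
rewrite exchange_big /=; apply: eq_bigr => i _.
rewrite mulr_sumr; apply: eq_bigr => j _; rewrite mxE mulrCA.
done.
Qed.

Lemma pairingDl d (u z x : point d) : pairing (u + z) x = pairing u x + pairing z x.
Proof. rewrite /pairing -big_split; apply: eq_bigr => j _; rewrite mxE mulrDl. done. Qed.
Lemma pairingZl d c (z x : point d) : pairing (c *: z) x = c * pairing z x.
Proof. rewrite /pairing mulr_sumr; apply: eq_bigr => j _; rewrite mxE mulrA. done. Qed.
Lemma pairingNl d (z x : point d) : pairing (- z) x = - pairing z x.
Proof. rewrite /pairing -sumrN; apply: eq_bigr => j _; rewrite mxE mulNr. done. Qed.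
Lemma pairingBl d (u z x : point d) : pairing (u - z) x = pairing u x - pairing z x.
Proof. by rewrite pairingDl pairingNl. Qed.
Lemma pairing0r d (u : point d) : pairing u 0 = 0.
Proof. rewrite /pairing big1 // => j _; rewrite mxE mulr0. done. Qed.

Lemma dual_iff d n (v : 'I_n -> point d) u :
  dual (conv_hull v) u <-> forall j, -1 <= pairing u (v j).
Proof.
split.
- move=> H j; apply: H; exists (fun i => (i == j)%:R); split; [by move=> i; rewrite ler0n|split].
  + by rewrite (bigD1 j) //= eqxx big1 ?addr0 // => i /negbTE ->.
  + by rewrite (bigD1 j) //= eqxx scale1r big1 ?addr0 // => i /negbTE ->; rewrite scale0r.
- move=> H x [a [ha [hs ->]]]; rewrite pairing_sumr.
  have -> : (-1 : rat) = \sum_i a i * -1 by rewrite -mulr_suml hs mul1r.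
  apply: ler_sum => i _.
  by rewrite ler_wpM2l // ?ha ?H.
Qed.



Lemma vertex_one_loose d (v : 'I_d.+1 -> point d) u k l :
  is_vertex (dual (conv_hull v)) u -> k != l ->
  -1 < pairing u (v k) -> -1 < pairing u (v l) -> False.
Proof.
move=> [Su Hv] nkl hk hl.
have /dual_iff Hu := Su.
pose B : 'M[rat]_d := \matrix_(r, j) (if lift k r == l then 0 else v (lift k r) 0 j).
have [r0 Hr0] : exists r0, lift k r0 = l.
  by have [r0 ->|E] := unliftP k l; [exists r0| rewrite E eqxx in nkl].
have dB : \det B^T == 0.
  rewrite det_tr; apply/det0P; exists (delta_mx 0 r0).
  - apply/eqP => /matrixP /(_ 0 r0); rewrite !mxE !eqxx /= => /eqP.
    by rewrite oner_eq0.
  - by rewrite -rowE; apply/rowP => j; rewrite !mxE Hr0 eqxx.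
have /det0P [z nz hz] := dB.
have orth m : m != k -> m != l -> pairing z (v m) = 0.
  move=> mk ml; have [r Er| E] := unliftP k m; last by rewrite E eqxx in mk.
  have := congr1 (fun M : 'M[rat]_(1,d) => M 0 r) hz; rewrite mxE [RHS]mxE => H0.
  rewrite -H0 /pairing; apply: eq_bigr => j _; rewrite !mxE -Er (negbTE ml).
  done.
pose c := 1 + `|pairing z (v k)| + `|pairing z (v l)|.
pose mm := Num.min (pairing u (v k) + 1) (pairing u (v l) + 1).
have c0 : 0 < c by rewrite /c; have := normr_ge0 (pairing z (v k)); have := normr_ge0 (pairing z (v l)); lra.
have mm0 : 0 < mm by rewrite /mm lt_min; apply/andP; split; lra.
have [e e0 ec] : exists2 e : rat, 0 < e & e * c = mm.
  by exists (mm / c); [rewrite divr_gt0 | rewrite divfK // gt_eqF].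
have bound j : e * `|pairing z (v j)| <= pairing u (v j) + 1.
  have Hj := Hu j.
  have hmk : mm <= pairing u (v k) + 1 by rewrite /mm ge_min lexx.
  have hml : mm <= pairing u (v l) + 1 by rewrite /mm ge_min lexx orbT.
  have nk := normr_ge0 (pairing z (v k)); have nl := normr_ge0 (pairing z (v l)).
  have [->|jk] := eqVneq j k.
    suff : e * `|pairing z (v k)| <= e * c by lra.
    by rewrite ler_wpM2l ?ltW // /c; lra.
  have [->|jl] := eqVneq j l.
    suff : e * `|pairing z (v l)| <= e * c by lra.
    by rewrite ler_wpM2l ?ltW // /c; lra.
  rewrite orth // normr0 mulr0; lra.
have key s j : `|s| = 1 -> -1 <= pairing (u + (s * e) *: z) (v j).
  move=> hs; rewrite pairingDl pairingZl.
  have := bound j; have := ler_norm (- (s * e * pairing z (v j))).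
  rewrite normrN !normrM hs mul1r (gtr0_norm e0) => h1 h2; lra.
have Sx : dual (conv_hull v) (u + (1 * e) *: z) by apply/dual_iff => j; apply: key; rewrite normr1.
have Sy : dual (conv_hull v) (u + (-1 * e) *: z) by apply/dual_iff => j; apply: key; rewrite normrN normr1.
have xy := Hv _ _ (1/2) Sx Sy.
have : u + (1 * e) *: z = u + (-1 * e) *: z.
  apply: xy; first by apply/andP; split; lra.
  by apply/rowP => j; rewrite !mxE; lra.
move=> E; apply: (negP nz); apply/eqP/rowP => j.
have := congr1 (fun M : 'M[rat]_(1,d) => M 0 j) E; rewrite !mxE => h.
have : e * z 0 j = 0 by lra.
by move/eqP; rewrite mulf_eq0 (gt_eqF e0) /= => /eqP.
Qed.

Lemma vertex_tight d (v : 'I_d.+1 -> point d) (a : 'I_d.+1 -> rat) u :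
  (forall i, 0 < a i) -> \sum_i a i = 1 -> \sum_i a i *: v i = 0 ->
  is_vertex (dual (conv_hull v)) u ->
  exists k, forall j, j != k -> pairing u (v j) = -1.
Proof.
move=> ha hs h0 Vu.
have /dual_iff Hu := Vu.1.
have [k hk] : exists k, -1 < pairing u (v k).
  case: (pickP (fun k => -1 < pairing u (v k))) => [k hk|hn]; first by exists k.
  exfalso.
  have e1 : forall k, pairing u (v k) = -1.
    by move=> k; have := Hu k; rewrite le_eqVlt hn orbF => /eqP.
  have := @pairing0r _ u; rewrite -h0 pairing_sumr.
  under eq_bigr => i _ do rewrite e1.
  rewrite -mulr_suml hs mul1r => /eqP; rewrite oppr_eq0 oner_eq0.
  done.
exists k => j jk; have := Hu j; rewrite le_eqVlt => /orP [/eqP //|hj].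
by case: (vertex_one_loose Vu jk hj hk).
Qed.

Lemma vertex_unique d (v : 'I_d.+1 -> point d) (a : 'I_d.+1 -> rat) u1 u2 k :
  (forall i, 0 < a i) -> \sum_i a i *: v i = 0 ->
  is_vertex (dual (conv_hull v)) u1 -> is_vertex (dual (conv_hull v)) u2 ->
  (forall j, j != k -> pairing u1 (v j) = -1) ->
  (forall j, j != k -> pairing u2 (v j) = -1) -> u1 = u2.
Proof.
move=> ha h0 [S1 V1] [S2 _] t1 t2.
pose z := u1 - u2.
have oz j : j != k -> pairing z (v j) = 0 by move=> jk; rewrite pairingBl t1 // t2 // subrr.
have ozk : pairing z (v k) = 0.
  have := @pairing0r _ z; rewrite -h0 pairing_sumr (bigD1 k) //= big1 ?addr0;
    last by move=> j jk; rewrite oz // mulr0.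
  by move/eqP; rewrite mulf_eq0 (gt_eqF (ha k)) /= => /eqP.
have oall j : pairing z (v j) = 0 by case: (eqVneq j k) => [->|/oz].
have /dual_iff H1 := S1.
have Sp : dual (conv_hull v) (u1 + z) by apply/dual_iff => j; rewrite pairingDl oall addr0.
have Sm : dual (conv_hull v) (u1 - z) by apply/dual_iff => j; rewrite pairingBl oall subr0.
have E : u1 + z = u1 - z.
  apply: (V1 _ _ (1/2) Sp Sm); first by apply/andP; split; lra.
  by apply/rowP => j; rewrite !mxE; lra.
apply/eqP; rewrite -subr_eq0; apply/eqP/rowP => j.
have := congr1 (fun M : 'M[rat]_(1,d) => M 0 j) E; rewrite !mxE; lra.
Qed.

Lemma dilate_vertex d (S : point d -> Prop) (g : rat) u :
  0 < g -> is_vertex S u -> is_vertex (dilate g S) (g *: u).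
Proof.
move=> g0 [Su Hv]; split; first by exists u.
move=> x y t [x' [Sx ->]] [y' [Sy ->]] ht E.
congr (g *: _); apply: Hv Sx Sy ht _.
apply: (@scalerI _ _ g); first by rewrite gt_eqF.
by rewrite E scalerDr !scalerA mulrC [(1 - t) * g]mulrC.
Qed.

Lemma den_dvd (x : rat) (c : int) : x * c%:~R \is a Num.int -> (denq x %| c)%Z.
Proof.
move=> /intrP [k hk].
have e : numq x * c = k * denq x.
  apply: (@intr_inj rat); rewrite !rmorphM /= numqE -hk mulrAC. done.
have : (denq x %| numq x * c)%Z by rewrite e dvdz_mull // dvdzz.
by rewrite Gauss_dvdzr // coprimezE coprime_sym coprime_num_den.
Qed.

Lemma denq_one (x : rat) : `|denq x|%N = 1%N -> x \is a Num.int.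
Proof.
move=> h; rewrite Qint_def; apply/eqP.
by move: (denq_gt0 x) h; case: (denq x) => [n|n] //= _ ->.
Qed.

Lemma prim_int d (v : point d) (x : rat) : primitive v ->
  (forall j, x * v 0 j \is a Num.int) -> x \is a Num.int.
Proof.
move=> [Iv Pv] H.
have hd j : (denq x %| numq (v 0%R j))%Z by apply: den_dvd; rewrite (numqK (Iv j)).
pose w : point d := \row_j (((numq (v 0%R j)) %/ denq x)%Z)%:~R.
apply: denq_one; apply: (Pv _ w).
  by move=> j; rewrite mxE intr_int.
apply/rowP => j; rewrite !mxE -{1}(numqK (Iv j)) -{1}(divzK (hd j)) rmorphM /= mulrC.
by congr (_ * _); move: (denq_gt0 x); case: (denq x).
Qed.

Lemma factor_int n (Q : 'I_n -> rat) lam (x : rat) : is_factor Q lam ->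
  (forall i, x * Q i \is a Num.int) -> x * lam \is a Num.int.
Proof.
move=> [_ [Q' [_ [hg hQ]]]] H.
have hd i : (denq (x * lam) %| (Q' i)%:Z)%Z.
  apply: den_dvd; have -> : x * lam * ((Q' i)%:Z)%:~R = x * Q i by rewrite hQ mulrA.
  exact: H.
apply: denq_one; apply/eqP; rewrite -dvdn1 -hg; apply/dvdn_biggcdP => i _.
exact: hd i.
Qed.

Lemma det_part n (W : 'M[rat]_n.+1) (vv : point n.+1) (g : nat) :
  (0 < g)%N -> primitive vv ->
  (forall r j, g%:R * W r j \is a Num.int) ->
  (forall r, \sum_j W r j * vv 0 j = -1) ->
  (g ^ n)%:R * \det W \is a Num.int.
Proof.
move=> g0 pv Wi Wv.
pose Y := g%:R *: W.
have Yi r j : Y r j \is a Num.int by rewrite mxE Wi.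
have Yv : Y *m vv^T = const_mx (- g%:R).
  apply/colP => r; rewrite !mxE.
  transitivity (g%:R * \sum_j W r j * vv 0 j); last by rewrite Wv mulrN1.
  rewrite mulr_sumr; apply: eq_bigr => j _; rewrite !mxE mulrA. done.
have key l : \det Y * vv 0 l = \sum_r \adj Y l r * - g%:R.
  have E := congr1 (fun M : 'cV[rat]_n.+1 => M l 0) (congr1 (mulmx (\adj Y)) Yv).
  rewrite /= mulmxA mul_adj_mx mul_scalar_mx in E.
  have -> : \det Y * vv 0 l = (\det Y *: vv^T) l 0 by rewrite !mxE.
  by rewrite E mxE; apply: eq_bigr => r _; rewrite [const_mx _ _ _]mxE.
apply: (@prim_int _ vv ((g ^ n)%:R * \det W) pv) => l.
have gn0 : (g%:R : rat) != 0 by rewrite pnatr_eq0 -lt0n.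
have : g%:R * ((g ^ n)%:R * \det W * vv 0 l) = g%:R * (- \sum_r \adj Y l r).
  have -> : g%:R * ((g ^ n)%:R * \det W * vv 0 l) = \det Y * vv 0 l.
    by rewrite /Y detZ exprS natrX !mulrA.
  by rewrite key -mulr_suml mulrN mulrN mulrC.
move/(mulfI gn0) => ->.
rewrite rpredN; apply: rpred_sum => r _.
rewrite mxE /cofactor; apply: rpredM.
  by apply: rpredX; apply: rpredN; apply: rpred1.
by apply: det_int => i j; rewrite !mxE.
Qed.

Unset Implicit Arguments.

Theorem lemma4p1 (d : nat) (v : 'I_d.+1 -> point d) (g : nat)
  (w : 'I_d.+1 -> point d) (lam : rat) :
  Fano_simplex v ->
  gorenstein_index v g ->
  enumerates_vertices (dual (conv_hull v)) w ->
  is_factor (weight w) lam ->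
  (g ^ (d - 1))%:R * lam \is a Num.int.
Proof.
move=> [_ [Prim [a [ha [hs h0]]]]] [g0 [gint _]] [winj wvert] fac.
destruct d as [|d].
  have [_ P] := Prim ord0.
  have I0 : integral (0 : point 0) by case=> m hm; exfalso; rewrite ltn0 in hm.
  have := P 0%N 0 I0; rewrite scale0r => H.
  by have := H (thinmx0 _).
have vert j : is_vertex (dual (conv_hull v)) (w j) by apply/wvert; exists j.
have [mk hmk] := fin_all_exists (fun j => vertex_tight ha hs h0 (vert j)).
have mk_inj : injective mk.
  move=> j1 j2 E; apply: winj.
  apply: (vertex_unique ha h0 (vert j1) (vert j2) (hmk j1)).
  by rewrite E; apply: hmk.
have wint j : integral (g%:R *: w j).
  by apply: gint; apply: dilate_vertex; [rewrite ltr0n | exact: vert j].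
apply: (factor_int fac) => i.
have hc : #|[set mk (lift i r) | r : 'I_d.+1]| = d.+1.
  by rewrite card_imset ?card_ord // => r1 r2 /mk_inj /lift_inj.
have [m hm] : exists m, m \notin [set mk (lift i r) | r : 'I_d.+1].
  case: (pickP (fun m => m \notin [set mk (lift i r) | r : 'I_d.+1])) => [m hm|hn].
    by exists m.
  exfalso.
  have : [set: 'I_d.+2] \subset [set mk (lift i r) | r : 'I_d.+1].
    by apply/subsetP => m _; have := hn m; rewrite /= => /negbFE.
  by move/subset_leq_card; rewrite cardsT card_ord hc ltnn.
have hm' r : m != mk (lift i r).
  apply: contraNneq hm => ->; apply/imsetP; exists r => //.
pose W := \matrix_(k < d.+1, j < d.+1) w (lift i k) 0 j.
have := @det_part d W (v m) g g0 (Prim m).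
have H1 : forall r j, g%:R * W r j \is a Num.int.
  by move=> r j; have := wint (lift i r) j; rewrite !mxE.
have H2 : forall r, \sum_j W r j * v m 0 j = -1.
  move=> r; rewrite -(hmk (lift i r) m (hm' r)) /pairing.
  by apply: eq_bigr => j _; rewrite mxE.
move=> /(_ H1 H2) /intrP [z Ez].
rewrite subSS subn0 /weight -/W -[(g ^ d)%:R]ger0_norm ?ler0n // -normrM Ez.
by rewrite -intr_norm intr_int.
Qed.
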